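(* Let $S$ be a $1$-synchronizable system. Let $a_1,\dots,a_n,b_1,\dots,b_m\in\Sigma_M$ and $\tau\in T_0(S)$ be such that $\tau\cdot !a_1\cdots !a_n\in T_n(S)$, $\tau\cdot !b_1\cdots !b_m\in T_m(S)$, and $\mathrm{src}(a_i)\neq\mathrm{src}(b_j)$ for all $i\in\{1,\dots,n\}$, $j\in\{1,\dots,m\}$. Then for any two different shuffles $\xi_1,\xi_2$ of the action sequence $!?a_1\cdots !?a_n$ with the action sequence $!?b_1\cdots !?b_m$, it holds that $\tau\cdot\xi_1\in T_\omega(S)$, $\tau\cdot\xi_2\in T_\omega(S)$, and $\tau\cdot\xi_1\equiv_S\tau\cdot\xi_2$.
   Context: A message set $M=(\Sigma_M,N,\mathrm{src},\mathrm{dst})$: finite set of messages, $N\ge1$ peers, $\mathrm{src}(a)\neq\mathrm{dst}(a)\in\{1,\dots,N\}$. Actions $!a$ (by peer $\mathrm{src}(a)$), $?a$ (by peer $\mathrm{dst}(a)$); traces are finite action sequences; $!?a$ abbreviates $!a\cdot?a$. For a trace $\tau$, $\pi_!(\tau)$ is the sequence of sent messages; $\mathrm{buf}_{i\to j}(\tau)$ is the word $w$ (if any) with (sent on $i\to j$) $=$ (received on $i\to j$)$\cdot w$. $\tau$ is FIFO ($k$-bounded FIFO) if for all $i,j$ and prefixes $\tau'$, $\mathrm{buf}_{i\to j}(\tau')$ is defined (and has length $\le k$); synchronous if of the form $!?a_1\cdots!?a_k$. A system $S=(P_1,\dots,P_N)$: finite automata $P_i$ (all states accepting) over actions of peer $i$,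 with one FIFO channel per ordered pair $i\neq j$. A configuration: one control state per peer and contents $w_{i,j}$ of channels; stable if all channels empty. $!a$ ($\mathrm{src}(a)=i,\mathrm{dst}(a)=j$) moves $P_i$ and appends $a$ to $w_{i,j}$; $?a$ moves $P_j$ and removes $a$ from the head of $w_{i,j}$; $c_0$ is the initial configuration. $T_k(S)$ ($k\ge1$): $k$-bounded FIFO traces $\tau$ with $c_0\xrightarrow{\tau}c$ for some $c$; $T_0(S)$: synchronous such traces; $T_\omega(S)=\bigcup_kT_k(S)$. $\tau_1\equiv_S\tau_2$ iff $\tau_1,\tau_2\in T_\omega(S)$ and there is $c$ with $c_0\xrightarrow{\tau_1}c$ and $c_0\xrightarrow{\tau_2}c$. $ST_k(S)=\{\pi_!(\tau)\mid\tau\in T_k(S)\}\cup\{(\pi_!(\tau),c)\mid c_0\xrightarrow{\tau}c,\ c\text{ stable},\ \tau\in T_k(S)\}$; $S$ is $1$-synchronizable if $ST_0(S)=ST_1(S)$. *)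

(* Defs.v *)
From mathcomp Require Import all_boot.
Set Implicit Arguments. Unset Strict Implicit. Unset Printing Implicit Defensive.

(* Message set M = (Sigma_M, N, src, dst); peers {1..N} are represented by 'I_N. *)
Record MsgSet := {
  msg : finType;
  npeers : nat;
  src : msg -> 'I_npeers;
  dst : msg -> 'I_npeers;
  npeers_pos : 0 < npeers;
  src_neq_dst : forall a, src a != dst a }.

Inductive action (M : MsgSet) := Send of msg M | Recv of msg M.
Arguments Send {M}. Arguments Recv {M}.

Definition peer_of (M : MsgSet) (x : action M) : 'I_(npeers M) :=
  match x with Send a => src a | Recv a => dst a end.

(* A system: one finite automaton per peer (all states accepting), over the
   actions of that peer. *)
Unset Implicit Arguments.
Record system (M : MsgSet) := {
  state : 'I_(npeers M) -> finType;
  init : forall i, state i;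
  delta : forall i, state i -> action M -> state i -> bool;
  delta_peer : forall i q x q', delta i q x q' -> peer_of x = i }.
Set Implicit Arguments.
Arguments init {M} s i.
Arguments delta {M} s {i}.
Arguments state {M} s i.

Record config (M : MsgSet) (S : system M) := {
  cst : forall i, state S i;
  chan : 'I_(npeers M) -> 'I_(npeers M) -> seq (msg M) }.

Definition c0 (M : MsgSet) (S : system M) : config S :=
  {| cst := init S; chan := fun _ _ => [::] |}.

Definition stable (M : MsgSet) (S : system M) (c : config S) : Prop :=
  forall i j, chan c i j = [::].

Definition step (M : MsgSet) (S : system M) (c : config S) (x : action M)
    (c' : config S) : Prop :=
  match x with
  | Send a =>
      delta S (cst c (src a)) (Send a) (cst c' (src a)) /\
      (forall k, k != src a -> cst c' k = cst c k) /\
      chan c' (src a) (dst a) = rcons (chan c (src a) (dst a)) a /\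
      (forall i j, (i, j) != (src a, dst a) -> chan c' i j = chan c i j)
  | Recv a =>
      delta S (cst c (dst a)) (Recv a) (cst c' (dst a)) /\
      (forall k, k != dst a -> cst c' k = cst c k) /\
      chan c (src a) (dst a) = a :: chan c' (src a) (dst a) /\
      (forall i j, (i, j) != (src a, dst a) -> chan c' i j = chan c i j)
  end.

Inductive reach (M : MsgSet) (S : system M) :
    config S -> seq (action M) -> config S -> Prop :=
  | reach_nil c : reach c [::] c
  | reach_cons c x c' t c'' : step c x c' -> reach c' t c'' -> reach c (x :: t) c''.

Definition sends (M : MsgSet) (t : seq (action M)) : seq (msg M) :=
  pmap (fun x => if x is Send a then Some a else None) t.
Definition recvs (M : MsgSet) (t : seq (action M)) : seq (msg M) :=
  pmap (fun x => if x is Recv a then Some a else None) t.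

Definition sent_on (M : MsgSet) (i j : 'I_(npeers M)) (t : seq (action M)) :=
  [seq a <- sends t | (src a == i) && (dst a == j)].
Definition recv_on (M : MsgSet) (i j : 'I_(npeers M)) (t : seq (action M)) :=
  [seq a <- recvs t | (src a == i) && (dst a == j)].

Definition buf_defined (M : MsgSet) (i j : 'I_(npeers M)) (t : seq (action M)) :=
  prefix (recv_on i j t) (sent_on i j t).
Definition buf_size (M : MsgSet) (i j : 'I_(npeers M)) (t : seq (action M)) :=
  size (sent_on i j t) - size (recv_on i j t).

Definition kfifo (M : MsgSet) (k : nat) (t : seq (action M)) : Prop :=
  forall n i j, buf_defined i j (take n t) /\ buf_size i j (take n t) <= k.

Definition sync_seq (M : MsgSet) (s : seq (msg M)) : seq (action M) :=
  flatten [seq [:: Send a; Recv a] | a <- s].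
Definition synchronous (M : MsgSet) (t : seq (action M)) : Prop :=
  exists s, t = sync_seq s.

Definition T (M : MsgSet) (S : system M) (k : nat) (t : seq (action M)) : Prop :=
  (if k is 0 then synchronous t else kfifo k t) /\ exists c, reach (c0 S) t c.
Definition Tomega (M : MsgSet) (S : system M) (t : seq (action M)) : Prop :=
  exists k, T S k t.

Definition equivS (M : MsgSet) (S : system M) (t1 t2 : seq (action M)) : Prop :=
  Tomega S t1 /\ Tomega S t2 /\
  exists c, reach (c0 S) t1 c /\ reach (c0 S) t2 c.

(* ST_k(S), a set of words and of (word, stable configuration) pairs *)
Definition ST (M : MsgSet) (S : system M) (k : nat)
    (x : seq (msg M) + (seq (msg M) * config S)) : Prop :=
  match x with
  | inl w => exists t, T S k t /\ sends t = w
  | inr (w, c) => exists t, T S k t /\ sends t = w /\ reach (c0 S) t c /\ stable c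
  end.

Arguments ST {M} S k x.

Definition one_synchronizable (M : MsgSet) (S : system M) : Prop :=
  forall x, ST S 0 x <-> ST S 1 x.

Inductive shuffle (A : Type) : seq A -> seq A -> seq A -> Prop :=
  | shuffle_nil : shuffle [::] [::] [::]
  | shuffle_l x u v w : shuffle u v w -> shuffle (x :: u) v (x :: w)
  | shuffle_r x u v w : shuffle u v w -> shuffle u (x :: v) (x :: w).

(* Main.v *)
Require Import Defs.
From mathcomp Require Import all_boot.
From Stdlib Require Import FunctionalExtensionality.
Set Implicit Arguments. Unset Strict Implicit. Unset Printing Implicit Defensive.


Section Basics.
Variable M : MsgSet.
Variable S : system M.
Local Notation I := ('I_(npeers M)).
Local Notation act := (action M).

Inductive lrun (i : I) : state S i -> seq act -> state S i -> Prop :=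
 | lrun_nil q : lrun q [::] q
 | lrun_cons q x q1 w q' : delta S q x q1 -> lrun q1 w q' -> lrun q (x :: w) q'.

Definition L (i : I) (w : seq act) := exists q, lrun (init S i) w q.

Lemma lrun_consE i q x w q' : lrun (i:=i) q (x :: w) q' -> exists q1, delta S q x q1 /\ lrun q1 w q'.
Proof. by move=> H; inversion H; subst; eauto. Qed.

Lemma lrun_nilE i q q' : lrun (i:=i) q [::] q' -> q = q'.
Proof. by move=> H; inversion H. Qed.

Lemma lrun_cat i q w1 w2 q' : lrun (i:=i) q (w1 ++ w2) q' <-> exists qm, lrun q w1 qm /\ lrun qm w2 q'.
Proof.
elim: w1 q => [|x w1 IH] q /=.
  by split=> [H|[qm [/lrun_nilE -> H]]] //; exists q; split=> //; constructor.
split=> [/lrun_consE [q1 [d /IH [qm [h1 h2]]]]|[qm [/lrun_consE [q1 [d h1]] h2]]].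
  by exists qm; split=> //; econstructor; eauto.
by econstructor; eauto; apply/IH; eauto.
Qed.

Lemma L_catl i w1 w2 : L i (w1 ++ w2) -> L i w1.
Proof. by case=> q /lrun_cat [qm [h _]]; exists qm. Qed.

Definition proj (i : I) (t : seq act) := [seq x <- t | peer_of x == i].
Definition projs (i : I) (s : seq (msg M)) := proj i (@sync_seq M s).

Lemma sync_seq_cons (x : msg M) s : sync_seq (x :: s) = Send x :: Recv x :: sync_seq s.
Proof. by []. Qed.
Lemma sync_seq_cat (s1 s2 : seq (msg M)) : sync_seq (s1 ++ s2) = sync_seq s1 ++ sync_seq s2.
Proof. by rewrite /sync_seq map_cat flatten_cat. Qed.
Lemma projs_cat i s1 s2 : projs i (s1 ++ s2) = projs i s1 ++ projs i s2.
Proof. by rewrite /projs sync_seq_cat /proj filter_cat. Qed.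
Lemma proj_cat i t1 t2 : proj i (t1 ++ t2) = proj i t1 ++ proj i t2.
Proof. by rewrite /proj filter_cat. Qed.
Lemma sends_sync (s : seq (msg M)) : sends (sync_seq s) = s.
Proof. by rewrite /sends; elim: s => //= x s ->. Qed.
Lemma sends_cat (t1 t2 : seq act) : sends (t1 ++ t2) = sends t1 ++ sends t2.
Proof. by rewrite /sends pmap_cat. Qed.

Definition upd (f : forall j : I, state S j) (p : I) (v : state S p) : forall j : I, state S j :=
  fun j => match p =P j with ReflectT e => eq_rect p (fun k => (state S k : Type)) v j e | ReflectF _ => f j end.

Arguments upd f p v j : clear implicits.
Lemma upd_same f p v : upd f p v p = v.
Proof. by rewrite /upd; case: eqP => // e; rewrite (eq_irrelevance e erefl). Qed.
Lemma upd_other f p v j : p != j -> upd f p v j = f j.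
Proof. by rewrite /upd; case: eqP. Qed.
Lemma upd_P (P : forall j : I, state S j -> Prop) f p v :
  (forall j, p != j -> P j (f j)) -> P p v -> forall j, P j (upd f p v j).
Proof. by move=> Hf Hv j; rewrite /upd; case: eqP => [e|/eqP]; [subst j|apply: Hf]. Qed.

End Basics.

Lemma projs_cons (M : MsgSet) (i : 'I_(npeers M)) (x : msg M) s : projs i (x :: s) =
  (if src x == i then [:: Send x] else if dst x == i then [:: Recv x] else [::]) ++ projs i s.
Proof.
rewrite /projs sync_seq_cons /proj /=.
case: (eqVneq (src x) i) => [<-|_]; last by case: ifP.
by have /negbTE -> : dst x != src x by rewrite eq_sym src_neq_dst.
Qed.


Arguments upd [M S] f p v j.
Section Reach.
Variable M : MsgSet.
Variable S : system M.
Local Notation I := ('I_(npeers M)).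
Local Notation act := (action M).

Lemma D1 (c : config S) t c' : reach c t c' -> forall j, lrun (cst c j) (proj j t) (cst c' j).
Proof.
elim=> {c t c'} [c|c x c1 t c2 st _ IH] j; first by constructor.
rewrite /proj /=; case: (eqVneq (peer_of x) j) => [<-|ne].
  econstructor; last exact: IH.
  by case: x st => a [d _] /=.
move: (IH j); congr lrun.
by case: x st ne => a [_ [H _]] /= ne; rewrite H // eq_sym.
Qed.

Definition onm (i j : I) (m : msg M) := (src m == i) && (dst m == j).
Definition onch (i j : I) (x : act) := match x with Send m | Recv m => onm i j m end.
Definition chw (i j : I) (t : seq act) := [seq x <- t | onch i j x].

Fixpoint qexec (q : seq (msg M)) (w : seq act) : option (seq (msg M)) :=
  match w with
  | [::] => Some q
  | Send a :: w' => qexec (rcons q a) w'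
  | Recv a :: w' => if q is b :: q' then (if b == a then qexec q' w' else None) else None
  end.

Definition chn (c : config S) (x : act) := fun i j => if onch i j x then
   (match x with Send a => rcons (chan c i j) a | Recv a => behead (chan c i j) end)
   else chan c i j.

Lemma step_mk (c : config S) x (q1 : state S (peer_of x)) :
  delta S (cst c (peer_of x)) x q1 ->
  (forall a, x = Recv a -> chan c (src a) (dst a) = a :: behead (chan c (src a) (dst a))) ->
  step c x {| cst := upd (cst c) (peer_of x) q1; chan := chn c x |}.
Proof.
case: x q1 => a q1 d H /=.
  split; first by rewrite upd_same.
  split; first by move=> k ne; rewrite upd_other // eq_sym.
  split; first by rewrite /chn /= /onm !eqxx.
  move=> i j ne; rewrite /chn /= /onm.
  by case: ifP => // /andP [/eqP e1 /eqP e2]; move: ne; rewrite e1 e2 eqxx.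
split; first by rewrite upd_same.
split; first by move=> k ne; rewrite upd_other // eq_sym.
split; first by rewrite /chn /= /onm !eqxx /=; apply: H.
move=> i j ne; rewrite /chn /= /onm.
by case: ifP => // /andP [/eqP e1 /eqP e2]; move: ne; rewrite e1 e2 eqxx.
Qed.

Lemma D2 t : forall (c : config S) (f : forall j, state S j) (chf : I -> I -> seq (msg M)),
  (forall j, lrun (cst c j) (proj j t) (f j)) ->
  (forall i j, qexec (chan c i j) (chw i j t) = Some (chf i j)) ->
  reach c t {| cst := f; chan := chf |}.
Proof.
elim: t => [|x t IH] c f chf Hl Hc.
  have e1 : forall j, cst c j = f j by move=> j; apply: lrun_nilE (Hl j).
  have e2 : forall i j, chan c i j = chf i j by move=> i j; case: (Hc i j).
  have -> : c = {| cst := f; chan := chf |}.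
    case: c Hl Hc e1 e2 => cs ch /= _ _ e1 e2; f_equal.
      exact: functional_extensionality_dep.
    by apply: functional_extensionality => i; apply: functional_extensionality.
  by constructor.
have := Hl (peer_of x); rewrite /proj /= eqxx => /lrun_consE [q1 [d r]].
have hd : forall a, x = Recv a -> chan c (src a) (dst a) = a :: behead (chan c (src a) (dst a)).
  move=> a ex; move: (Hc (src a) (dst a)); rewrite ex /chw /= /onm !eqxx /=.
  by case: (chan c (src a) (dst a)) => //= b q; case: eqP => // ->.
apply: reach_cons (step_mk d hd) _.
apply: IH.
  apply: (@upd_P _ S (fun j q => lrun q (proj j t) (f j))) => [j ne|//]; by move: (Hl j); rewrite /proj /= (negbTE ne).
move=> i j; move: (Hc i j); rewrite /chn /chw /=.
case: ifP => // _; case: x {Hl Hc d r hd q1} => a //=.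
by case: (chan c i j) => //= b q; case: eqP.
Qed.

End Reach.


Section Chan.
Variable M : MsgSet.
Local Notation I := ('I_(npeers M)).
Local Notation act := (action M).

Lemma chw_cat (i j : I) t1 t2 : chw i j (t1 ++ t2) = chw i j t1 ++ chw i j t2.
Proof. by rewrite /chw filter_cat. Qed.

Lemma chw_sync (i j : I) (s : seq (msg M)) : chw i j (sync_seq s) = sync_seq [seq m <- s | onm i j m].
Proof. by elim: s => // x s IH; rewrite sync_seq_cons /chw /= -/(chw i j _) IH; case: (onm i j x). Qed.

Lemma sent_onE (i j : I) (t : seq act) : sent_on i j t = sends (chw i j t).
Proof. elim: t => // x t IH; case: x => a; rewrite /sent_on /chw /sends /= -/(sends t) -/(sent_on i j t) IH /onm; by case: ifP. Qed.

Lemma recv_onE (i j : I) (t : seq act) : recv_on i j t = recvs (chw i j t).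
Proof. elim: t => // x t IH; case: x => a; rewrite /recv_on /chw /recvs /= -/(recvs t) -/(recv_on i j t) IH /onm; by case: ifP. Qed.

Lemma filter_take_ex (T : Type) (p : pred T) (t : seq T) n : exists m, filter p (take n t) = take m (filter p t).
Proof.
elim: t n => [|x t IH] n; first by exists 0; case: n.
case: n => [|n]; first by exists 0; rewrite !take0.
rewrite /=; have [m ->] := IH n; case: ifP => _; last by exists m.
by exists m.+1.
Qed.

Definition good1 (w : seq act) := (exists s, w = sync_seq s) \/ (exists s x, w = sync_seq s ++ [:: Send x]).

Lemma good1_take_sync (s : seq (msg M)) m : good1 (take m (sync_seq s)).
Proof.
elim: s m => [|x s IH] m; first by left; exists [::]; case: m.
case: m => [|[|m]]; first by left; exists [::].
  by right; exists [::], x.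
rewrite sync_seq_cons /=; case: (IH m) => [[s' ->]|[s' [y ->]]].
  by left; exists (x :: s').
by right; exists (x :: s'), y.
Qed.

Lemma good1_take w m : good1 w -> good1 (take m w).
Proof.
case=> [[s ->]|[s [x ->]]]; first exact: good1_take_sync.
rewrite take_cat; case: ifP => _; first exact: good1_take_sync.
case: (m - size (sync_seq s)) => [|k] /=; last by right; exists s, x.
by left; exists s; rewrite cats0.
Qed.

Lemma recvs_sync (s : seq (msg M)) : recvs (sync_seq s) = s.
Proof. by rewrite /recvs; elim: s => //= x s ->. Qed.

Lemma good1_buf w : good1 w -> prefix (recvs w) (sends w) /\ size (sends w) - size (recvs w) <= 1.
Proof.
case=> [[s ->]|[s [x ->]]]; first by rewrite recvs_sync sends_sync prefix_refl subnn.
rewrite /recvs /sends !pmap_cat /= -/(recvs _) -/(sends _) recvs_sync sends_sync cats0.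
by rewrite prefix_prefix size_cat addKn.
Qed.

Lemma kfifo1_of (t : seq act) : (forall i j, good1 (chw i j t)) -> kfifo 1 t.
Proof.
move=> H n i j; rewrite /buf_defined /buf_size sent_onE recv_onE.
have [m e] := filter_take_ex (onch i j) t n; rewrite /chw e -/(chw i j t).
exact: good1_buf (good1_take m (H i j)).
Qed.

Lemma qexec_cat q (w1 w2 : seq act) :
  qexec q (w1 ++ w2) = if qexec q w1 is Some q' then qexec q' w2 else None.
Proof.
elim: w1 q => [|[a|a] w1 IH] q //=.
by case: q => // b q; case: eqP.
Qed.

Lemma qexec_sync (s : seq (msg M)) : qexec [::] (sync_seq s) = Some [::].
Proof. by elim: s => //= x s; rewrite eqxx. Qed.

Lemma qexec_good1 w : good1 w -> exists q, qexec [::] w = Some q.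
Proof.
case=> [[s ->]|[s [x ->]]]; first by rewrite qexec_sync; eauto.
by rewrite qexec_cat qexec_sync /=; eauto.
Qed.

End Chan.

Arguments upd [M S] f p v j.

Section Sync.
Variable M : MsgSet.
Variable S : system M.
Local Notation I := ('I_(npeers M)).
Local Notation act := (action M).
Hypothesis H1 : one_synchronizable S.

Lemma sync1 (t : seq act) : (forall i j, good1 (chw i j t)) -> (forall j, L S j (proj j t)) ->
  forall j, L S j (projs j (sends t)).
Proof.
move=> Hg HL.
have /fin_all_exists [f Hf] : forall j, exists q : state S j, lrun (init S j) (proj j t) q.
  by move=> j; case: (HL j) => q h; exists q.
pose chf i j := odflt [::] (qexec [::] (chw i j t)).
have R : reach (c0 S) t {| cst := f; chan := chf |}.
  apply: D2 => [j|i j] /=; first exact: Hf.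
  by case: (qexec_good1 (Hg i j)) => q e; rewrite /chf e.
have : ST S 1 (inl (sends t)) by exists t; split=> //; split; [exact: kfifo1_of | exists {| cst := f; chan := chf |}].
move/(H1 (inl _)).2 => [t' [[[s ->] [c Rc]] es]] j.
rewrite sends_sync in es; subst s.
by exists (cst c j); exact: (D1 Rc j).
Qed.

Lemma sync1_stable (t : seq act) (f : forall j, state S j) :
  (forall i j, exists s, chw i j t = sync_seq s) ->
  (forall j, lrun (init S j) (proj j t) (f j)) ->
  forall j, lrun (init S j) (projs j (sends t)) (f j).
Proof.
move=> Hg Hf.
pose C := {| cst := f; chan := fun _ _ => [::] |}.
have R : reach (c0 S) t C.
  apply: D2 => [j|i j] /=; first exact: Hf.
  by case: (Hg i j) => s ->; rewrite qexec_sync.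
have : ST S 1 (inr (sends t, C)).
  exists t; split; last by [].
  split; last by exists C.
  by apply: kfifo1_of => i j; left; apply: Hg.
move/(H1 (inr _)).2 => [t' [[[s ->] _] [es [Rc _]]]] j.
rewrite sends_sync in es; subst s.
exact: (D1 Rc j).
Qed.

End Sync.

Arguments upd [M S] f p v j.

Section G.
Variable M : MsgSet.
Variable S : system M.
Local Notation I := ('I_(npeers M)).
Local Notation act := (action M).
Hypothesis H1 : one_synchronizable S.

Definition sf (j : I) (s : seq (msg M)) := [seq m <- s | src m == j].

Lemma Lpre j u v v' : L S j (u ++ map (@Send M) v) -> prefix v' v -> L S j (u ++ map (@Send M) v').
Proof. by move=> H /prefixP [w e]; move: H; rewrite e map_cat catA => /L_catl. Qed.

Lemma projs_src (q : I) R : all (fun y => src y == q) R -> projs q R = map (@Send M) R.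
Proof. by elim: R => //= y R IH /andP [/eqP e /IH]; rewrite projs_cons e eqxx => ->. Qed.

Lemma projs1 (j : I) (x : msg M) : projs j [:: x] =
  if src x == j then [:: Send x] else if dst x == j then [:: Recv x] else [::].
Proof. by rewrite projs_cons cats0. Qed.

Lemma proj_send (j : I) (x : msg M) : proj j [:: Send x] = if src x == j then [:: Send x] else [::].
Proof. by []. Qed.

Lemma chw_send1 (i k : I) (x : msg M) : chw i k [:: Send x] = if onm i k x then [:: Send x] else [::].
Proof. by []. Qed.

Lemma sends_cons_send x (t : seq act) : sends (Send x :: t) = x :: sends t.
Proof. by []. Qed.

Lemma Gstar n : forall (sg s0 : seq (msg M)), size sg <= n ->
  (forall j, L S j (projs j s0 ++ map (@Send M) (sf j sg))) -> forall j, L S j (projs j (s0 ++ sg)).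
Proof.
elim: n => [|n IH] [|x sg] s0 //= Hsz Hyp j; try by move: (Hyp j); rewrite !cats0.
have pq : src x != dst x := src_neq_dst x.
set p := src x in pq *; set q := dst x in pq *.
have sfx : forall j, sf j (x :: sg) = if p == j then x :: sf j sg else sf j sg by [].
have CR : L S q (projs q s0 ++ Recv x :: map (@Send M) (sf q sg)).
  have [e|[R [sr e]]] : sf q sg = [::] \/ exists R sr, sf q sg = rcons R sr.
    by case: (lastP (sf q sg)) => [|R sr]; [left|right; exists R, sr].
  - have := @sync1 _ _ H1 (sync_seq s0 ++ [:: Send x]).
    rewrite sends_cat sends_sync /= => /(_ _ _ q); rewrite projs_cat projs1 (negbTE pq) eqxx e /=.
    apply.
      move=> i k; rewrite chw_cat chw_sync /chw /=; case: ifP => _.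
        by right; exists [seq m <- s0 | onm i k m], x.
      by left; exists [seq m <- s0 | onm i k m]; rewrite cats0.
    move=> k; move: (Hyp k); rewrite proj_cat -/(projs k s0) proj_send.
    case: ifP => _; last by rewrite cats0 => /L_catl.
    by rewrite map_cons -cat1s catA => /L_catl.
  have allR : all (fun y => src y == q) R.
    by have := filter_all (fun y => src y == q) sg; rewrite -/(sf q sg) e all_rcons => /andP [].
  have sizeR : size (x :: R) <= n.
    have := size_filter (fun y => src y == q) sg; rewrite -/(sf q sg) e size_rcons => h.
    by rewrite /= h; apply: leq_trans (count_size _ _) Hsz.
  have [srq _] : src sr == q /\ true.
    by have := filter_all (fun y => src y == q) sg; rewrite -/(sf q sg) e all_rcons => /andP [].
  have fR0 : forall k, q != k -> [seq y <- R | src y == k] = [::].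
    move=> k nk; apply/eqP; rewrite -[_ == _]negbK -has_filter.
    by apply/hasPn => y /(allP allR) /eqP ->.
  have pre : forall k, prefix (sf k (x :: R)) (sf k (x :: sg)).
    move=> k; rewrite /sf /=.
    case: (eqVneq q k) => [<-|nk].
      by rewrite (negbTE pq) (all_filterP allR) -/(sf q sg) e prefix_rcons.
    by rewrite fR0 //; case: ifP => _ //=; rewrite ?eqxx ?prefix0s.
  have E1 := IH (x :: R) s0 sizeR (fun k => Lpre (v := sf k (x :: sg)) (Hyp k) (pre k)).
  have qp : q != p by rewrite eq_sym.
  pose t2 := sync_seq s0 ++ [:: Send x] ++ sync_seq R ++ [:: Send sr].
  have := @sync1 _ _ H1 t2 _ _ q.
  rewrite /t2 !sends_cat !sends_sync /= !projs_cat projs_cons (negbTE pq) eqxx /=.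
  rewrite projs_cat (projs_src allR) projs1 srq e map_rcons -cats1; apply.
    move=> i k; rewrite -[Send x :: _]cat1s !chw_cat !chw_sync !chw_send1.
    case Ox: (onm i k x).
      move/andP: (Ox) => [/eqP ei _].
      have -> : [seq m <- R | onm i k m] = [::].
        apply/eqP; rewrite -[_ == _]negbK -has_filter; apply/hasPn => y /(allP allR) /eqP ey.
        by rewrite /onm ey -ei (negbTE qp).
      have -> : onm i k sr = false by rewrite /onm (eqP srq) -ei (negbTE qp).
      by right; exists [seq m <- s0 | onm i k m], x.
    case: (onm i k sr).
      by right; exists ([seq m <- s0 | onm i k m] ++ [seq m <- R | onm i k m]), sr; rewrite /= sync_seq_cat -catA.
    by left; exists ([seq m <- s0 | onm i k m] ++ [seq m <- R | onm i k m]); rewrite /= cats0 sync_seq_cat.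
  move=> k; rewrite -[Send x :: _]cat1s !proj_cat -!/(projs _ _) !proj_send.
  case: (eqVneq q k) => [<-|nk].
    rewrite (negbTE pq) srq (projs_src allR) /=.
    by move: (Hyp q); rewrite (negbTE pq) e map_rcons -cats1.
  have -> : (src sr == k) = false by rewrite (eqP srq) (negbTE nk).
  move: (E1 k); rewrite projs_cat projs_cons cats0.
  by have -> : (dst x == k) = false by apply/negbTE.
rewrite -cat1s catA; apply: IH => // k.
rewrite projs_cat projs1; case: (eqVneq p k) => [<-|nk].
  by move: (Hyp p); rewrite eqxx /= -catA.
case: (eqVneq q k) => [<-|nq].
  by rewrite -catA.
by rewrite cats0; move: (Hyp k); rewrite (negbTE (nk : src x != k)).
Qed.

End G.

Arguments upd [M S] f p v j.

Section Swap.
Variable M : MsgSet.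
Variable S : system M.
Local Notation I := ('I_(npeers M)).
Local Notation act := (action M).
Hypothesis H1 : one_synchronizable S.

Lemma window (j : I) (x y : msg M) : src x != src y ->
  proj j [:: Send x; Send y; Recv y; Recv x] =
  if src x == j then projs j [:: x; y] else projs j [:: y; x].
Proof.
move=> sxy; rewrite !projs_cons /projs /proj /=.
have nx := src_neq_dst x; have ny := src_neq_dst y.
case: (eqVneq (src x) j) => [ex|nsx]; case: (eqVneq (src y) j) => [ey|nsy];
case: (eqVneq (dst x) j) => [dx|ndx]; case: (eqVneq (dst y) j) => [dy|ndy] => //=;
by move: nx ny sxy; rewrite ?ex ?ey ?dx ?dy eqxx.
Qed.

Lemma chw_window (i k : I) (x y : msg M) : src x != src y ->
  chw i k [:: Send x; Send y; Recv y; Recv x] = sync_seq [seq m <- [:: x; y] | onm i k m].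
Proof.
move=> sxy; rewrite /chw /= /onm.
case: (eqVneq (src x) i) => [ex|nsx]; case: (eqVneq (src y) i) => [ey|nsy] => //=;
  try by move: sxy; rewrite ex ey eqxx.
by case: (dst x == k).
by case: (dst y == k).
Qed.

Lemma swap (i : I) (s0 P Q : seq (msg M)) (x y : msg M) : src x != src y -> src x != i ->
  (forall j, L S j (projs j (s0 ++ P ++ x :: y :: Q))) ->
  (forall j, L S j (projs j (s0 ++ P ++ y :: x :: Q))) ->
  forall q, lrun (init S i) (projs i (s0 ++ P ++ y :: x :: Q)) q ->
            lrun (init S i) (projs i (s0 ++ P ++ x :: y :: Q)) q.
Proof.
move=> sxy sxi Lxy Lyx q Hq.
pose T1 := sync_seq (s0 ++ P) ++ [:: Send x; Send y; Recv y; Recv x] ++ sync_seq Q.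
have ecat : forall u v : msg M, s0 ++ P ++ u :: v :: Q = (s0 ++ P) ++ [:: u; v] ++ Q.
  by move=> u v; rewrite catA.
have PT : forall j, proj j T1 = if src x == j then projs j (s0 ++ P ++ x :: y :: Q)
                                 else projs j (s0 ++ P ++ y :: x :: Q).
  move=> j; rewrite /T1 !proj_cat -!/(projs _ _) (window j sxy) !ecat !projs_cat.
  by case: ifP.
have /fin_all_exists [f Hf] : forall j, exists q : state S j, lrun (init S j) (proj j T1) q.
  by move=> j; rewrite PT; case: ifP => _; [case: (Lxy j) | case: (Lyx j)] => r h; exists r.
have := @sync1_stable _ _ H1 T1 (upd f i q) _ _ i.
  rewrite upd_same /T1 !sends_cat !sends_sync /= -catA; apply.
  move=> i' k; rewrite /T1 !chw_cat !chw_sync -[_ :: _]/([:: Send x; Send y; Recv y; Recv x] ++ sync_seq Q) chw_cat chw_sync (chw_window i' k sxy) -!sync_seq_cat.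
  by eexists.
apply: (@upd_P _ S (fun j r => lrun (init S j) (proj j T1) r)) => [j _|]; first exact: Hf.
by rewrite PT (negbTE sxi).
Qed.

End Swap.


Section Bubble.
Variable T : eqType.
Variable R : seq T -> seq T -> Prop.
Variable W : seq T -> Prop.
Variables U V : seq T.
Hypothesis Rrefl : forall s, R s s.
Hypothesis Rtrans : forall s1 s2 s3, R s1 s2 -> R s2 s3 -> R s1 s3.
Hypothesis Hswap : forall P Q x y, x \in U -> y \in V ->
  W (P ++ y :: x :: Q) -> W (P ++ x :: y :: Q) -> R (P ++ y :: x :: Q) (P ++ x :: y :: Q).

Lemma shuffle_catr (u v : seq T) : shuffle u v (v ++ u).
Proof.
elim: v => [|y v IH] /=; last by constructor.
by elim: u => [|x u IH]; constructor.
Qed.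

Lemma move_left x Tl : x \in U -> forall v P, {subset v <= V} ->
  (forall w, shuffle (x :: Tl) v w -> W (P ++ w)) ->
  R (P ++ v ++ x :: Tl) (P ++ x :: v ++ Tl).
Proof.
move=> xU; elim=> [|y v IH] P sV HW; first exact: Rrefl.
apply: (Rtrans (s2 := P ++ y :: x :: v ++ Tl)).
  have := IH (P ++ [:: y]) _ _; rewrite -!catA /=; apply.
    by move=> z zv; apply: sV; rewrite inE zv orbT.
  by move=> w sw; rewrite -catA /=; apply: HW; constructor.
apply: Hswap; first exact: xU.
- by apply: sV; rewrite inE eqxx.
- by apply: HW; do 2 constructor; apply: shuffle_catr.
- by apply: HW; do 2 constructor; apply: shuffle_catr.
Qed.

Lemma bubble_gen u v w : shuffle u v w -> forall P, {subset u <= U} -> {subset v <= V} ->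
  (forall w', shuffle u v w' -> W (P ++ w')) -> R (P ++ v ++ u) (P ++ w).
Proof.
elim=> {u v w} [|x u v w _ IH|y u v w _ IH] P sU sV HW; first exact: Rrefl.
- apply: (Rtrans (s2 := P ++ x :: v ++ u)).
    by apply: move_left => //; apply: sU; rewrite inE eqxx.
  have := IH (P ++ [:: x]); rewrite -!catA /=; apply.
  + by move=> z zu; apply: sU; rewrite inE zu orbT.
  + exact: sV.
  + by move=> w' sw; rewrite -catA; apply: HW; constructor.
- have := IH (P ++ [:: y]); rewrite -!catA /=; apply.
  + exact: sU.
  + by move=> z zv; apply: sV; rewrite inE zv orbT.
  + by move=> w' sw; rewrite -catA; apply: HW; constructor.
Qed.

Lemma bubble w : shuffle U V w -> (forall w', shuffle U V w' -> W w') -> R (V ++ U) w.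
Proof. by move=> sw HW; apply: (bubble_gen sw (P := [::])). Qed.

End Bubble.


Lemma shuffle_filter (T : Type) (p : pred T) u v w : shuffle u v w ->
  shuffle (filter p u) (filter p v) (filter p w).
Proof. by elim=> {u v w} [|x u v w _ IH|x u v w _ IH] //=; try constructor; case: ifP => // _; constructor. Qed.

Lemma shuffle_pmap (T T' : Type) (f : T -> option T') u v w : shuffle u v w ->
  shuffle (pmap f u) (pmap f v) (pmap f w).
Proof. by elim=> {u v w} [|x u v w _ IH|x u v w _ IH] //=; try constructor; case: (f x) => //= y; constructor. Qed.

Lemma shuffle_nilr (T : Type) (u v w : seq T) : shuffle u v w -> v = [::] -> w = u.
Proof. by elim=> {u v w} [|x u v w _ IH|x u v w _ IH] //= e; rewrite IH. Qed.

Lemma shuffle_nill (T : Type) (u v w : seq T) : shuffle u v w -> u = [::] -> w = v.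
Proof. by elim=> {u v w} [|x u v w _ IH|x u v w _ IH] //= e; rewrite IH. Qed.

Lemma shuffle_sym (T : Type) (u v w : seq T) : shuffle u v w -> shuffle v u w.
Proof. by elim=> {u v w} *; constructor. Qed.

Section Emit.
Variable M : MsgSet.
Local Notation I := ('I_(npeers M)).
Local Notation act := (action M).

Definition emitf (j : I) (x : act) : option (msg M) :=
  match x with Send m => if dst m == j then None else Some m
             | Recv m => if dst m == j then Some m else None end.
Definition emit (j : I) (t : seq act) := pmap (emitf j) t.

Lemma emit_sync j (s : seq (msg M)) : emit j (sync_seq s) = s.
Proof. by elim: s => //= x s IH; rewrite /emit /= -/(emit j _) IH; case: ifP. Qed.

Lemma projs_emit j (t : seq act) : projs j (emit j t) = proj j t.
Proof.
elim: t => // [[m|m]] t IH; rewrite /emit /= -/(emit j _).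
  case: (eqVneq (dst m) j) => [e|ne] /=.
    rewrite IH /proj /= -/(proj j t); case: (eqVneq (src m) j) => // e'.
    by move: (src_neq_dst m); rewrite e e' eqxx.
  by rewrite projs_cons IH (negbTE ne); case: ifP.
case: (eqVneq (dst m) j) => [e|ne] /=.
  by rewrite projs_cons IH e eqxx; case: ifP => // /eqP e'; move: (src_neq_dst m); rewrite e e' eqxx.
by rewrite IH.
Qed.

End Emit.


Lemma proj_mapSend M (j : 'I_(npeers M)) (a : seq (msg M)) : proj j (map (@Send M) a) = map (@Send M) (sf j a).
Proof. by rewrite /proj filter_map. Qed.

Lemma filter_nil0 (T : eqType) (p : pred T) (s : seq T) : (forall x, x \in s -> ~~ p x) -> filter p s = [::].
Proof. by elim: s => //= x s IH H; rewrite (negbTE (H x (mem_head _ _))) IH // => y ys; apply: H; rewrite inE ys orbT. Qed.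

Theorem lemma4p9 (M : MsgSet) (S : system M) (a b : seq (msg M))
    (tau xi1 xi2 : seq (action M)) :
  one_synchronizable S ->
  T S 0 tau ->
  T S (size a) (tau ++ map Send a) ->
  T S (size b) (tau ++ map Send b) ->
  (forall x y, x \in a -> y \in b -> src x != src y) ->
  shuffle (sync_seq a) (sync_seq b) xi1 ->
  shuffle (sync_seq a) (sync_seq b) xi2 ->
  xi1 <> xi2 ->
  Tomega S (tau ++ xi1) /\ Tomega S (tau ++ xi2) /\
  equivS S (tau ++ xi1) (tau ++ xi2).
Proof.
move=> H1 [[s0 ->] _] [_ [ca Ra]] [_ [cb Rb]] disj sh1 sh2 _.
have La : forall j, L S j (projs j s0 ++ map (@Send M) (sf j a)).
  by move=> j; exists (cst ca j); move: (D1 Ra j); rewrite proj_cat proj_mapSend.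
have Lb : forall j, L S j (projs j s0 ++ map (@Send M) (sf j b)).
  by move=> j; exists (cst cb j); move: (D1 Rb j); rewrite proj_cat proj_mapSend.
have side : forall j, (sf j b = [::]) \/ (sf j a = [::] /\ forall x, x \in a -> src x != j).
  move=> j; case hA: (has (fun m => src m == j) a).
    left; case/hasP: hA => x xa /eqP <-; apply: filter_nil0 => y yb.
    by rewrite eq_sym; apply: disj.
  right; move/negbT/hasPn: hA => hA; split=> //; exact: filter_nil0.
have Wsh : forall w, shuffle a b w -> forall j, L S j (projs j (s0 ++ w)).
  move=> w sw; apply: (Gstar H1 (n := size w)) => // j.
  have := shuffle_filter (fun m => src m == j) sw; rewrite -!/(sf j _).
  case: (side j) => [e|[e _]] sfw.
    by rewrite (shuffle_nilr sfw e).
  by rewrite (shuffle_nill sfw e).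
pose R (j : 'I_(npeers M)) (w1 w2 : seq (msg M)) :=
  forall q, lrun (init S j) (projs j (s0 ++ w1)) q -> lrun (init S j) (projs j (s0 ++ w2)) q.
pose W (w : seq (msg M)) := forall k, L S k (projs k (s0 ++ w)).
have Rrefl : forall j s, R j s s by move=> j s q.
have Rtrans : forall j s1 s2 s3, R j s1 s2 -> R j s2 s3 -> R j s1 s3 by move=> j s1 s2 s3 h1 h2 q /h1 /h2.
have /fin_all_exists [f Hf] : forall j, exists q : state S j,
    forall w, shuffle a b w -> lrun (init S j) (projs j (s0 ++ w)) q.
  move=> j; case: (side j) => [e|[e na]].
    have nb : forall y, y \in b -> src y != j.
      move=> y yb; apply/negP => /eqP ey.
      have : y \in sf j b by rewrite mem_filter ey eqxx.
      by rewrite e.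
    have [q Hq] := Wsh (a ++ b) (shuffle_sym (shuffle_catr b a)) j.
    exists q => w sw.
    have := @bubble _ (R j) W b a (Rrefl j) (Rtrans j) _ w (shuffle_sym sw).
    apply=> //.
      move=> P Q x y xb ya Wyx Wxy; apply: (swap H1) => //.
        by rewrite eq_sym; apply: disj.
      exact: nb.
    by move=> w' /shuffle_sym; apply: Wsh.
  have [q Hq] := Wsh (b ++ a) (shuffle_catr a b) j.
  exists q => w sw.
  have := @bubble _ (R j) W a b (Rrefl j) (Rtrans j) _ w sw.
  apply=> //.
    move=> P Q x y xa yb Wyx Wxy; apply: (swap H1) => //.
      exact: disj.
    exact: na.
pose C := {| cst := f; chan := fun _ _ : 'I_(npeers M) => [::] : seq (msg M) |}.
have key : forall xi, shuffle (sync_seq a) (sync_seq b) xi ->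
    T S 1 (sync_seq s0 ++ xi) /\ reach (c0 S) (sync_seq s0 ++ xi) C.
  move=> xi sxi.
  have Hc : forall i k, exists s, chw i k (sync_seq s0 ++ xi) = sync_seq s.
    move=> i k; rewrite chw_cat chw_sync.
    have := shuffle_filter (onch i k) sxi; rewrite -!/(chw i k _) !chw_sync => sh.
    case: (side i) => [e|[e _]].
      have e' : [seq m <- b | onm i k m] = [::].
        by apply: filter_nil0 => y yb; apply/negP => /andP [/eqP ey _];
           move: (mem_filter (fun m => src m == i) y b); rewrite -/(sf i b) e ey eqxx yb.
      by rewrite (shuffle_nilr sh); [rewrite -sync_seq_cat; eexists | rewrite e'].
    have e' : [seq m <- a | onm i k m] = [::].
      by apply: filter_nil0 => y ya; apply/negP => /andP [/eqP ey _];
         move: (mem_filter (fun m => src m == i) y a); rewrite -/(sf i a) e ey eqxx ya.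
    by rewrite (shuffle_nill sh); [rewrite -sync_seq_cat; eexists | rewrite e'].
  have Rc : reach (c0 S) (sync_seq s0 ++ xi) C.
    apply: D2 => [j|i k] /=.
      rewrite proj_cat -/(projs j s0) -(projs_emit j xi) -projs_cat.
      apply: Hf; have := shuffle_pmap (emitf j) sxi; rewrite -!/(emit j _) !emit_sync //.
    by case: (Hc i k) => s ->; rewrite qexec_sync.
  split=> //; split; last by exists C.
  by apply: kfifo1_of => i k; left; apply: Hc.
have [T1 R1] := key _ sh1; have [T2 R2] := key _ sh2.
split; first by exists 1.
split; first by exists 1.
split; first by exists 1.
split; first by exists 1.
by exists C.
Qed.
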